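(* Let $k\ge1$, let $(\Lambda,d)$ be a $k$-graph, and let $p,q\in\mathbb{N}^k$. Then $q(p\Lambda)=(q+p)\Lambda$; that is, the dual of the $k$-graph $(p\Lambda,d_p)$ with respect to $q$ and the dual of $\Lambda$ with respect to $q+p$ have the same paths, the same range and source maps, the same composition, and the same degree map.
   Context: A $k$-graph is a pair $(\Lambda,d)$ where $\Lambda$ is a countable category and $d:\Lambda\to\mathbb{N}^k$ is a functor satisfying the factorisation property: if $\lambda$ is a morphism with $d(\lambda)=m+n$, then there are unique morphisms $\mu\in d^{-1}(m)$, $\nu\in d^{-1}(n)$ with $\lambda=\mu\nu$. Morphisms are called paths; vertices are identified with paths of degree $0$; $\Lambda^n:=d^{-1}(n)$. For $\lambda$ with $d(\lambda)=n$ and $l\le m\le n$, $\lambda(l,m)$ denotes the unique path of degree $m-l$ with $\lambda=\lambda(0,l)\lambda(l,m)\lambda(m,n)$. For $p\in\mathbb{N}^k$, the dual $k$-graph $p\Lambda$ has paths $\{\lambda\in\Lambda:d(\lambda)\ge p\}$, vertices $\Lambda^p$, range $r_p(\lambda)=\lambda(0,p)$, source $s_p(\lambda)=\lambda(d(\lambda)-p,d(\lambda))$, composition $\lambda\circ_p\mu=\lambda\,\mu(p,d(\mu))$ when $s_p(\lambda)=r_p(\mu)$, and degree $d_p(\lambda)=d(\lambda)-p$; $(p\Lambda,d_p)$ is again a $k$-graph, so its dual $q(p\Lambda)$ is defined by the same recipe. *)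

(* Defs.v *)
From mathcomp Require Import all_boot.
Set Implicit Arguments. Unset Strict Implicit. Unset Printing Implicit Defensive.

Definition degk (k : nat) := {ffun 'I_k -> nat}.
Definition dzero k : degk k := [ffun => 0].
Definition dadd k (m n : degk k) : degk k := [ffun i => m i + n i].
Definition dsub k (m n : degk k) : degk k := [ffun i => m i - n i].
Definition dle k (m n : degk k) : Prop := forall i, m i <= n i.

(* A k-graph presented "arrows only" on a carrier type T: the morphisms
   (paths) are the elements satisfying [kpath]; objects are identified with
   identity morphisms; [krange]/[ksource] give the identity morphisms at the
   range/source; [kcomp] is composition (meaningful when composable);
   [kdeg] is the degree functor d; [kseg l m lam] is lam(l,m), a chosen
   witness of the factorisation property (uniquely determined by it). *)
Record kgraph_data (k : nat) (T : Type) := KGraphData {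
  kpath : T -> Prop;
  krange : T -> T;
  ksource : T -> T;
  kcomp : T -> T -> T;
  kdeg : T -> degk k;
  kseg : T -> degk k -> degk k -> T }.

Section KGraph.
Variables (k : nat) (T : Type) (G : kgraph_data k T).
Local Notation P := (kpath G).
Local Notation r := (krange G).
Local Notation s := (ksource G).
Local Notation comp := (kcomp G).
Local Notation d := (kdeg G).
Local Notation seg := (kseg G).

Definition is_kgraph : Prop :=
  (forall f, P f -> P (r f) /\ P (s f)) /\
  (forall f, P f -> r (r f) = r f /\ s (r f) = r f /\
                    r (s f) = s f /\ s (s f) = s f) /\
  (forall f g, P f -> P g -> s f = r g ->
     P (comp f g) /\ r (comp f g) = r f /\ s (comp f g) = s g) /\
  (forall f, P f -> comp (r f) f = f /\ comp f (s f) = f) /\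
  (forall f g h, P f -> P g -> P h -> s f = r g -> s g = r h ->
     comp (comp f g) h = comp f (comp g h)) /\
  (forall f, P f -> d (r f) = dzero k) /\
  (forall f g, P f -> P g -> s f = r g -> d (comp f g) = dadd (d f) (d g)) /\
  (forall f m n, P f -> d f = dadd m n ->
     exists mu nu, [/\ P mu, P nu, d mu = m, d nu = n
                     & s mu = r nu /\ f = comp mu nu]) /\
  (forall f m n mu nu mu' nu', P f -> P mu -> P nu -> P mu' -> P nu' ->
     d mu = m -> d nu = n -> s mu = r nu -> f = comp mu nu ->
     d mu' = m -> d nu' = n -> s mu' = r nu' -> f = comp mu' nu' ->
     mu = mu' /\ nu = nu') /\
  (forall f l m, P f -> dle l m -> dle m (d f) ->
     [/\ P (seg f (dzero k) l), P (seg f l m) & P (seg f m (d f))] /\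
     [/\ d (seg f (dzero k) l) = l, d (seg f l m) = dsub m l
        & d (seg f m (d f)) = dsub (d f) m] /\
     [/\ s (seg f (dzero k) l) = r (seg f l m),
         s (seg f l m) = r (seg f m (d f))
       & f = comp (comp (seg f (dzero k) l) (seg f l m)) (seg f m (d f))]).
End KGraph.

Definition kdual (k : nat) (T : Type) (p : degk k) (G : kgraph_data k T)
  : kgraph_data k T :=
  {| kpath := fun f => kpath G f /\ dle p (kdeg G f);
     krange := fun f => kseg G f (dzero k) p;
     ksource := fun f => kseg G f (dsub (kdeg G f) p) (kdeg G f);
     kcomp := fun f g => kcomp G f (kseg G g p (kdeg G g));
     kdeg := fun f => dsub (kdeg G f) p;
     kseg := fun f l m => kseg G f l (dadd m p) |}.

(* Main.v *)
Require Import Defs.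
From mathcomp Require Import all_boot.
From mathcomp Require Import zify.

Section Aux.
Variables (k : nat) (T : Type) (G : kgraph_data k T).
Local Notation P := (kpath G).
Local Notation r := (krange G).
Local Notation s := (ksource G).
Local Notation comp := (kcomp G).
Local Notation d := (kdeg G).
Local Notation seg := (kseg G).

Lemma seg_split (HG : is_kgraph G) g l : P g -> dle l (d g) ->
  exists a, [/\ P a, d a = l, s a = r (seg g l (d g)) & g = comp a (seg g l (d g))]
   /\ P (seg g l (d g)) /\ d (seg g l (d g)) = dsub (d g) l.
Proof.
move: HG => [A1 [A2 [A3 [A4 [A5 [A6 [A7 [A8 [A9 A10]]]]]]]]] Pg Hl.
have [[P1 P2 P3] [[D1 D2 D3] [S1 S2 E]]] := A10 g l l Pg (fun i => leqnn _) Hl.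
have [PA [RA SA]] := A3 _ _ P1 P2 S1.
exists (comp (seg g (dzero k) l) (seg g l l)); split; last by split.
split => //.
- rewrite A7 // D1 D2; apply/ffunP => i; rewrite !ffunE subnn addn0 //.
- by rewrite SA.
Qed.

Lemma seg_seg (HG : is_kgraph G) g q p : P g -> dle (dadd q p) (d g) ->
  seg (seg g q (d g)) p (d (seg g q (d g))) = seg g (dadd q p) (d g).
Proof.
move=> Pg Hqp.
have HG' := HG.
move: HG' => [A1 [A2 [A3 [A4 [A5 [A6 [A7 [A8 [A9 A10]]]]]]]]].
have Hq : dle q (d g) by move=> i; have := Hqp i; rewrite ffunE; lia.
have [a [[Pa Da Sa Ea] [Ph Dh]]] := seg_split HG _ _ Pg Hq.
set h := seg g q (d g) in Sa Ea Ph Dh *.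
have Hp : dle p (d h) by move=> i; have := Hqp i; rewrite Dh !ffunE; lia.
have [b [[Pb Db Sb Eb] [Ph3 Dh3]]] := seg_split HG _ _ Ph Hp.
set h3 := seg h p (d h) in Sb Eb Ph3 Dh3 *.
have [c [[Pc Dc Sc Ec] [Pe De]]] := seg_split HG _ _ Pg Hqp.
set e := seg g (dadd q p) (d g) in Sc Ec Pe De *.
have [Pbh [Rbh Sbh]] := A3 _ _ Pb Ph3 Sb.
have Sab : s a = r b by rewrite Sa Eb Rbh.
have [Pab [Rab Sab']] := A3 _ _ Pa Pb Sab.
have Eg : g = comp (comp a b) h3.
  by rewrite (A5 _ _ _ Pa Pb Ph3 Sab Sb) -Eb.
have Dab : d (comp a b) = dadd q p by rewrite A7 // Da Db.
have Dh3' : d h3 = dsub (d g) (dadd q p).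
  by rewrite Dh3 Dh; apply/ffunP => i; rewrite !ffunE subnDA.
have [_ ->] := A9 g (dadd q p) (dsub (d g) (dadd q p)) (comp a b) h3 c e
  Pg Pab Ph3 Pc Pe Dab Dh3' (etrans Sab' Sb) Eg Dc De Sc Ec.
by [].
Qed.
End Aux.

Theorem proposition3p4 (k : nat) (T : countType) (G : kgraph_data k T)
    (p q : degk k) :
  0 < k -> is_kgraph G ->
  let G1 := kdual q (kdual p G) in
  let G2 := kdual (dadd q p) G in
  (forall f, kpath G1 f <-> kpath G2 f) /\
  (forall f, kpath G1 f ->
     [/\ krange G1 f = krange G2 f,
         ksource G1 f = ksource G2 f,
         kdeg G1 f = kdeg G2 f
       & forall g, kpath G1 g -> ksource G1 f = krange G1 g ->
           kcomp G1 f g = kcomp G2 f g]).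
Proof.
move=> _ HG G1 G2; rewrite /G1 /G2 /=; split.
  move=> f; split.
    move=> [[Pf Hp] Hq]; split => // i; have := Hp i; have := Hq i; rewrite !ffunE; lia.
  move=> [Pf H]; split; [split => // i|] => [|i]; have := H i; rewrite !ffunE; lia.
move=> f [[Pf Hp] Hq].
have Hpf : dsub (kdeg G f) p = dsub (kdeg G f) p by [].
split => //.
- congr (kseg G f _ _); apply/ffunP => i; rewrite !ffunE; have := Hp i; move: (kdeg G f i) (p i) (q i) => x y z; lia.
- apply/ffunP => i; rewrite !ffunE; lia.
- move=> g [[Pg Hpg] Hqg] _.
  have E1 : dadd (dsub (kdeg G g) p) p = kdeg G g.
    by apply/ffunP => i; rewrite !ffunE; have := Hpg i; move: (kdeg G g i) (p i) => x y; lia.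
  rewrite E1; congr (kcomp G f _).
  apply: seg_seg => // i; have := Hpg i; have := Hqg i; rewrite !ffunE; move: (kdeg G g i) (p i) (q i) => x y z; lia.
Qed.
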